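(* Let $\mathbb{F}$ be a field, $m,b\in\mathbb{F}$ with $m\neq0$, $m\neq1$. Consider the reduction system $\Gamma$ in $\mathbb{F}\langle A,B,C\rangle$ consisting of the pairs $\alpha=\left(AB,\frac{mC-bI}{m-1}\right)$, $\beta=(AC,mCA)$, $\gamma=\left(BA,\frac{C-bI}{m-1}\right)$, $\delta=(CB,mBC)$, and $\varepsilon(k)=\left(BC^kA,\frac{C^{k+1}-bC^k}{m^k(m-1)}\right)$ for $k=1,2,\ldots$. Then $\Gamma$ has no inclusion ambiguities and every (overlap) ambiguity of $\Gamma$ is resolvable.
   Context: A reduction system in $\mathbb{F}\langle A,B,C\rangle$ is a set $S$ of pairs $\mu=(W_\mu,f_\mu)$ with $W_\mu$ a word (element of the free monoid on $A,B,C$) and $f_\mu\in\mathbb{F}\langle A,B,C\rangle$. For words $L,R$ and $\mu\in S$, the reduction $r_{L\mu R}$ is the linear map of $\mathbb{F}\langle A,B,C\rangle$ fixing every word except $LW_\mu R$, which it sends to $Lf_\mu R$. An overlap ambiguity is a tuple $(\mu,\nu,L,X,R)$ with $\mu,\nu\in S$, $L,X,R$ nonempty words, $W_\mu=LX$, $W_\nu=XR$; it is resolvable if there are finite compositions of reductions $\lambda,\rho$ with $\lambda(f_\mu R)=\rho(Lf_\nu)$. An inclusion ambiguity is $(\mu,\nu,L,X,R)$ with $\mu\ne\nu$, $W_\mu=X$, $W_\nu=LXR$; it is resolvable if $\lambda(Lf_\mu R)=\rho(f_\nu)$ for some compositions of reductions $\lambda,\rho$. *)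

(* Defs.v *)
(* The free algebra F<A,B,C> is modelled as coefficient
   functions word -> F (all elements we use are finitely supported). *)
From HB Require Import structures.
From mathcomp Require Import all_boot all_algebra.
Set Implicit Arguments. Unset Strict Implicit. Unset Printing Implicit Defensive.
Import GRing.Theory.
Local Open Scope ring_scope.

Inductive letter := LA | LB | LC.

Definition letter_eqb (x y : letter) : bool :=
  match x, y with LA, LA | LB, LB | LC, LC => true | _, _ => false end.
Lemma letter_eqP : Equality.axiom letter_eqb.
Proof. by case; case; constructor. Qed.
HB.instance Definition _ := hasDecEq.Build letter letter_eqP.

Definition word := seq letter.

Section FreeAlg.
Variable F : fieldType.

Definition falg := word -> F.

Definition fa_word (w : word) : falg := fun u => (u == w)%:R.
Definition fa_add (p q : falg) : falg := fun u => p u + q u.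
Definition fa_scale (c : F) (p : falg) : falg := fun u => c * p u.
Definition fa_lmul (L : word) (p : falg) : falg :=
  fun u => if take (size L) u == L then p (drop (size L) u) else 0.
Definition fa_rmul (p : falg) (R : word) : falg :=
  fun u => if drop (size u - size R) u == R then p (take (size u - size R) u) else 0.

Record redsys := RedSys { rs_idx : Type; rs_W : rs_idx -> word; rs_f : rs_idx -> falg }.

Definition reduction (S : redsys) (L : word) (mu : rs_idx S) (R : word) (p : falg) : falg :=
  let W := L ++ rs_W mu ++ R in
  fun u => (if u == W then 0 else p u) + p W * fa_lmul L (fa_rmul (rs_f mu) R) u.

Definition reductions (S : redsys) (l : seq (word * rs_idx S * word)) (p : falg) : falg :=
  foldl (fun q t => reduction t.1.1 t.1.2 t.2 q) p l.

Definition overlap_resolvable (S : redsys) (mu nu : rs_idx S) (L R : word) : Prop :=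
  exists lam rho : seq (word * rs_idx S * word),
    reductions lam (fa_rmul (rs_f mu) R) = reductions rho (fa_lmul L (rs_f nu)).

Definition is_overlap_ambiguity (S : redsys) (mu nu : rs_idx S) (L X R : word) : Prop :=
  [/\ L != [::], X != [::], R != [::], rs_W mu = L ++ X & rs_W nu = X ++ R].

Definition is_inclusion_ambiguity (S : redsys) (mu nu : rs_idx S) (L X R : word) : Prop :=
  [/\ mu <> nu, rs_W mu = X & rs_W nu = L ++ X ++ R].

(* The system Gamma.  Eps k stands for epsilon(k.+1), k.+1 = 1, 2, ... *)
Inductive gamma_idx := Alpha | Beta | Gamma | Delta | Eps of nat.

Definition Cpow (k : nat) : word := nseq k LC.

Definition gamma_W (i : gamma_idx) : word :=
  match i with
  | Alpha => [:: LA; LB]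
  | Beta => [:: LA; LC]
  | Gamma => [:: LB; LA]
  | Delta => [:: LC; LB]
  | Eps k => LB :: Cpow k.+1 ++ [:: LA]
  end.

Definition gamma_f (m b : F) (i : gamma_idx) : falg :=
  match i with
  | Alpha => fa_scale (m - 1)^-1 (fa_add (fa_scale m (fa_word [:: LC])) (fa_scale (- b) (fa_word [::])))
  | Beta => fa_scale m (fa_word [:: LC; LA])
  | Gamma => fa_scale (m - 1)^-1 (fa_add (fa_word [:: LC]) (fa_scale (- b) (fa_word [::])))
  | Delta => fa_scale m (fa_word [:: LB; LC])
  | Eps k => fa_scale (m ^+ k.+1 * (m - 1))^-1
               (fa_add (fa_word (Cpow k.+2)) (fa_scale (- b) (fa_word (Cpow k.+1))))
  end.

Definition Gamma_sys (m b : F) : redsys := @RedSys gamma_idx gamma_W (gamma_f m b).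

End FreeAlg.

(* Main.v *)
Require Import Defs.
From HB Require Import structures.
From mathcomp Require Import all_boot all_algebra.
From mathcomp Require Import ring zify.
From Stdlib Require Import FunctionalExtensionality.
Set Implicit Arguments. Unset Strict Implicit. Unset Printing Implicit Defensive.
Import GRing.Theory.
Local Open Scope ring_scope.
Arguments Cpow : simpl never.

Section Gen.
Variable F : fieldType.
Implicit Types (p q : falg F) (L R w : word).

Lemma lmul_word L w : fa_lmul L (fa_word F w) = fa_word F (L ++ w).
Proof.
apply: functional_extensionality => u; rewrite /fa_lmul /fa_word.
case: eqP => [Ht|Ht].
  congr ((nat_of_bool _)%:R); apply/eqP/eqP => [<-|->].
    by rewrite -{1}Ht cat_take_drop.
  by rewrite drop_size_cat.
case: eqP => // Hu; by rewrite Hu take_size_cat in Ht.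
Qed.

Lemma rmul_word w R : fa_rmul (fa_word F w) R = fa_word F (w ++ R).
Proof.
apply: functional_extensionality => u; rewrite /fa_rmul /fa_word.
case: eqP => [Ht|Ht].
  congr ((nat_of_bool _)%:R); apply/eqP/eqP => [<-|->].
    by rewrite -{2}Ht cat_take_drop.
  by rewrite size_cat addnK take_size_cat.
case: eqP => // Hu; by rewrite Hu size_cat addnK drop_size_cat in Ht.
Qed.

Lemma lmul_add L p q : fa_lmul L (fa_add p q) = fa_add (fa_lmul L p) (fa_lmul L q).
Proof. apply: functional_extensionality => u; rewrite /fa_lmul /fa_add; case: ifP => _; rewrite ?addr0 ?mulr0 //. Qed.
Lemma lmul_scale L c p : fa_lmul L (fa_scale c p) = fa_scale c (fa_lmul L p).
Proof. apply: functional_extensionality => u; rewrite /fa_lmul /fa_scale; case: ifP => _; rewrite ?addr0 ?mulr0 //. Qed.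
Lemma rmul_add R p q : fa_rmul (fa_add p q) R = fa_add (fa_rmul p R) (fa_rmul q R).
Proof. apply: functional_extensionality => u; rewrite /fa_rmul /fa_add; case: ifP => _; rewrite ?addr0 ?mulr0 //. Qed.
Lemma rmul_scale R c p : fa_rmul (fa_scale c p) R = fa_scale c (fa_rmul p R).
Proof. apply: functional_extensionality => u; rewrite /fa_rmul /fa_scale; case: ifP => _; rewrite ?addr0 ?mulr0 //. Qed.
Lemma scale1 p : fa_scale 1 p = p.
Proof. by apply: functional_extensionality => u; rewrite /fa_scale mul1r. Qed.
Lemma scale_scale a c p : fa_scale a (fa_scale c p) = fa_scale (a * c) p.
Proof. by apply: functional_extensionality => u; rewrite /fa_scale mulrA. Qed.

Variable S : redsys F.

Lemma red_add L (mu : rs_idx S) R p q : reduction L mu R (fa_add p q) = fa_add (reduction L mu R p) (reduction L mu R q).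
Proof. apply: functional_extensionality => u; rewrite /reduction /fa_add /=; case: ifP => _; ring. Qed.
Lemma red_scale L (mu : rs_idx S) R c p : reduction L mu R (fa_scale c p) = fa_scale c (reduction L mu R p).
Proof. apply: functional_extensionality => u; rewrite /reduction /fa_scale /=; case: ifP => _; ring. Qed.
Lemma red_word_ne L (mu : rs_idx S) R w : w != L ++ rs_W mu ++ R -> reduction L mu R (fa_word F w) = fa_word F w.
Proof.
move=> H; apply: functional_extensionality => u; rewrite /reduction /fa_word /=.
have Hf : (L ++ rs_W mu ++ R == w) = false by apply/negbTE; rewrite eq_sym.
rewrite Hf mul0r addr0; case: eqP => // ->; by rewrite Hf.
Qed.
Lemma red_word_eq L (mu : rs_idx S) R w : w = L ++ rs_W mu ++ R -> reduction L mu R (fa_word F w) = fa_lmul L (fa_rmul (rs_f mu) R).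
Proof.
move=> ->; apply: functional_extensionality => u; rewrite /reduction /fa_word /= eqxx mul1r.
by case: eqP; rewrite add0r.
Qed.

Lemma reds_cons t l p : reductions (S:=S) (t :: l) p = reductions l (reduction t.1.1 t.1.2 t.2 p).
Proof. by []. Qed.
Lemma reds_cat l1 l2 p : reductions (S:=S) (l1 ++ l2) p = reductions l2 (reductions l1 p).
Proof. by rewrite /reductions foldl_cat. Qed.
Lemma reds_add l p q : reductions (S:=S) l (fa_add p q) = fa_add (reductions l p) (reductions l q).
Proof. by elim: l p q => //= t l IH p q; rewrite red_add IH. Qed.
Lemma reds_scale l c p : reductions (S:=S) l (fa_scale c p) = fa_scale c (reductions l p).
Proof. by elim: l p => //= t l IH p; rewrite red_scale IH. Qed.
Lemma reds_fix l n w : all (fun t => size (t.1.1 ++ rs_W t.1.2 ++ t.2) == n) l -> size w != n ->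
  reductions (S:=S) l (fa_word F w) = fa_word F w.
Proof.
elim: l => //= t l IH /andP[/eqP Ht Hl] Hw; rewrite red_word_ne ?IH //.
by apply/eqP => E; move: Hw; rewrite E Ht eqxx.
Qed.
End Gen.
Section Gam.
Variables (F : fieldType) (m b : F).
Hypotheses (hm0 : m != 0) (hm1 : m != 1).
Notation S := (Gamma_sys m b).
Notation w := (fa_word F).

Lemma CpowS n : Cpow n.+1 = LC :: Cpow n. Proof. by []. Qed.
Lemma Cpow_cons n s : Cpow n ++ LC :: s = LC :: (Cpow n ++ s).
Proof. by elim: n => // n IH; rewrite CpowS /= IH. Qed.
Lemma size_Cpow n : size (Cpow n) = n. Proof. exact: size_nseq. Qed.

Lemma chainA j : forall i, exists l : seq (word * gamma_idx * word),
  reductions (S:=S) l (w (Cpow i ++ LA :: Cpow j)) = fa_scale (m ^+ j) (w (Cpow (i + j) ++ [:: LA]))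
  /\ all (fun t => size (t.1.1 ++ gamma_W t.1.2 ++ t.2) == (i + j).+1) l.
Proof.
elim: j => [|j IH] i.
  by exists [::]; rewrite addn0 expr0 scale1.
have [l [H1 H2]] := IH i.+1.
exists ((Cpow i, Beta, Cpow j) :: l); split.
  rewrite reds_cons /= (red_word_eq (S:=S) (L:=Cpow i) (mu:=Beta)) //.
  rewrite rmul_scale lmul_scale rmul_word lmul_word /= Cpow_cons -cat_cons -CpowS.
  by rewrite reds_scale H1 scale_scale exprS addSnnS.
apply/andP; split; last by rewrite -addSnnS.
rewrite /= !size_cat /= !size_Cpow; apply/eqP; lia.
Qed.

Lemma chainB j : forall i, exists l : seq (word * gamma_idx * word),
  reductions (S:=S) l (w (Cpow j ++ LB :: Cpow i)) = fa_scale (m ^+ j) (w (LB :: Cpow (j + i)))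
  /\ all (fun t => size (t.1.1 ++ gamma_W t.1.2 ++ t.2) == (j + i).+1) l.
Proof.
elim: j => [|j IH] i.
  by exists [::]; rewrite expr0 scale1.
have [l [H1 H2]] := IH i.+1.
exists ((Cpow j, Delta, Cpow i) :: l); split.
  rewrite reds_cons /= (red_word_eq (S:=S) (L:=Cpow j) (mu:=Delta)); last by rewrite /= Cpow_cons.
  rewrite rmul_scale lmul_scale rmul_word lmul_word /=.
  by rewrite reds_scale H1 scale_scale exprS addnS.
apply/andP; split; last by rewrite -addnS.
rewrite /= !size_cat /= !size_Cpow; apply/eqP; lia.
Qed.
End Gam.
Section Cases.
Variables (F : fieldType) (m b : F).
Hypotheses (hm0 : m != 0) (hm1 : m != 1).
Notation S := (Gamma_sys m b).
Notation w := (fa_word F).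

Lemma red_word L (mu : gamma_idx) R x : reduction (S:=S) L mu R (w x) =
  if x == L ++ gamma_W mu ++ R then fa_lmul L (fa_rmul (gamma_f m b mu) R) else w x.
Proof. by case: eqP => [->|/eqP H]; [rewrite (red_word_eq (S:=S))|rewrite (red_word_ne (S:=S))]. Qed.

Lemma hd1 : m - 1 != 0. Proof. by rewrite subr_eq0. Qed.

Lemma reds_nil p : reductions (S:=S) [::] p = p. Proof. by []. Qed.
Definition lred := locked (@reduction F S).
Lemma reds_consL t l p : reductions (S:=S) (t :: l) p = reductions l (lred t.1.1 t.1.2 t.2 p).
Proof. by rewrite /lred -lock. Qed.
Lemma lred_add L mu R p q : lred L mu R (fa_add p q) = fa_add (lred L mu R p) (lred L mu R q).
Proof. by rewrite /lred -lock red_add. Qed.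
Lemma lred_scale L mu R c p : lred L mu R (fa_scale c p) = fa_scale c (lred L mu R p).
Proof. by rewrite /lred -lock red_scale. Qed.
Lemma lred_word L (mu : gamma_idx) R x : lred L mu R (w x) =
  if x == L ++ gamma_W mu ++ R then fa_lmul L (fa_rmul (gamma_f m b mu) R) else w x.
Proof. by rewrite /lred -lock red_word. Qed.
Arguments fa_scale : simpl never.
Arguments fa_add : simpl never.
Arguments fa_word : simpl never.
Arguments fa_lmul : simpl never.
Arguments fa_rmul : simpl never.
Arguments reductions : simpl never.
Ltac lin := rewrite /=; repeat progress (rewrite ?rmul_add ?rmul_scale ?rmul_word ?lmul_add ?lmul_scale ?lmul_word
   ?reds_consL ?reds_nil ?lred_add ?lred_scale ?lred_word /=).
Ltac fin := apply: functional_extensionality => u; rewrite /fa_add /fa_scale /fa_word /=.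

Lemma case1 : overlap_resolvable (S:=S) Alpha Gamma [:: LA] [:: LA].
Proof. exists [::], [:: ([::], Beta, [::])]; by lin. Qed.

Lemma case3 : overlap_resolvable (S:=S) Gamma Alpha [:: LB] [:: LB].
Proof. exists [:: ([::], Delta, [::])], [::]; lin; try done; fin; rewrite ?exprS; field; rewrite ?hd1 ?hm0 ?mulf_neq0 ?expf_neq0 ?hd1 //.
Qed.

Lemma case4 : overlap_resolvable (S:=S) Gamma Beta [:: LB] [:: LC].
Proof. exists [::], [:: ([::], Eps 0, [::])]; lin; try done; fin; rewrite ?exprS; field; rewrite ?hd1 ?hm0 ?mulf_neq0 ?expf_neq0 ?hd1 //.
Qed.

Lemma case5 : overlap_resolvable (S:=S) Delta Gamma [:: LC] [:: LA].
Proof. exists [:: ([::], Eps 0, [::])], [::]; lin; try done; fin; rewrite ?exprS; field; rewrite ?hd1 ?hm0 ?mulf_neq0 ?expf_neq0 ?hd1 //.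
Qed.

Lemma case7 : overlap_resolvable (S:=S) Beta Delta [:: LA] [:: LB].
Proof. exists [:: ([:: LC], Alpha, [::])], [:: ([::], Alpha, [:: LC])]; lin; try done; fin; rewrite ?exprS; field; rewrite ?hd1 ?hm0 ?mulf_neq0 ?expf_neq0 ?hd1 //.
Qed.
Lemma Cpow_rcons n : Cpow n ++ [:: LC] = LC :: Cpow n.
Proof. by rewrite Cpow_cons cats0. Qed.
Lemma lred_eq L (mu : gamma_idx) R x : x = L ++ gamma_W mu ++ R -> lred L mu R (w x) =
  fa_lmul L (fa_rmul (gamma_f m b mu) R).
Proof. by move=> ->; rewrite lred_word eqxx. Qed.
Lemma lred_ne L (mu : gamma_idx) R x : x != L ++ gamma_W mu ++ R -> lred L mu R (w x) = w x.
Proof. by move=> H; rewrite lred_word (negbTE H). Qed.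
Ltac lin2 := rewrite /=; repeat progress (rewrite ?rmul_add ?rmul_scale ?rmul_word ?lmul_add ?lmul_scale ?lmul_word
   ?reds_consL ?reds_nil ?lred_add ?lred_scale /=).

Lemma case6 k : overlap_resolvable (S:=S) Delta (Eps k) [:: LC] (Cpow k.+1 ++ [:: LA]).
Proof.
exists [:: ([::], Eps k.+1, [::])], [::]; lin2.
rewrite (lred_eq (L:=[::]) (mu:=Eps k.+1) (R:=[::])); last by rewrite cats0.
lin2; rewrite ?cats0 ?Cpow_rcons ?CpowS.
fin; rewrite !exprS; field; rewrite ?hd1 ?hm0 ?mulf_neq0 ?expf_neq0 ?hd1 //.
Qed.

Lemma case9 k : overlap_resolvable (S:=S) (Eps k) Beta (LB :: Cpow k.+1) [:: LC].
Proof.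
exists [::], [:: ([::], Eps k.+1, [::])]; lin2.
rewrite (lred_eq (L:=[::]) (mu:=Eps k.+1) (R:=[::])); last by rewrite cats0 /= Cpow_cons.
lin2; rewrite ?cats0 ?Cpow_rcons ?CpowS.
fin; rewrite ?exprS; field; rewrite ?hd1 ?hm0 ?mulf_neq0 ?expf_neq0 ?hd1 //.
Qed.
Lemma Cpow0 : Cpow 0 = [::]. Proof. by []. Qed.

Lemma case2 k : overlap_resolvable (S:=S) Alpha (Eps k) [:: LA] (Cpow k.+1 ++ [:: LA]).
Proof.
have [l1 [H1 H1']] := @chainA F m b hm0 hm1 k.+2 0.
have [l2 [H2 H2']] := @chainA F m b hm0 hm1 k.+1 0.
rewrite Cpow0 /= in H1 H2.
exists [::], (l1 ++ l2); rewrite /=.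
rewrite reds_nil !rmul_scale !rmul_add !rmul_scale !rmul_word.
rewrite !lmul_scale !lmul_add !lmul_scale !lmul_word.
rewrite reds_cat !reds_scale !reds_add !reds_scale /=.
rewrite H1 (reds_fix (S:=S) H1'); last by rewrite /= ?size_cat size_Cpow; apply/eqP; lia.
rewrite H2 reds_scale (reds_fix (S:=S) H2'); last by rewrite /= ?size_cat size_Cpow /=; apply/eqP; lia.
rewrite ?cats0 ?Cpow_rcons ?CpowS.
fin; rewrite ?exprS; field; rewrite ?hd1 ?hm0 ?mulf_neq0 ?expf_neq0 ?hd1 //.
Qed.
Lemma case8 k : overlap_resolvable (S:=S) (Eps k) Alpha (LB :: Cpow k.+1) [:: LB].
Proof.
have [l1 [H1 H1']] := @chainB F m b hm0 hm1 k.+2 0.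
have [l2 [H2 H2']] := @chainB F m b hm0 hm1 k.+1 0.
rewrite Cpow0 !addn0 in H1 H2 H1' H2'.
exists (l1 ++ l2), [::]; rewrite /=.
rewrite reds_nil !rmul_scale !rmul_add !rmul_scale !rmul_word.
rewrite !lmul_scale !lmul_add !lmul_scale !lmul_word.
rewrite reds_cat !reds_scale !reds_add !reds_scale /=.
rewrite H1 (reds_fix (S:=S) H1'); last by rewrite /= ?size_cat size_Cpow /=; apply/eqP; lia.
rewrite H2 reds_scale (reds_fix (S:=S) H2'); last by rewrite /= ?size_cat size_Cpow /=; apply/eqP; lia.
rewrite ?cats0 ?Cpow_rcons ?CpowS.
fin; rewrite ?exprS; field; rewrite ?hd1 ?hm0 ?mulf_neq0 ?expf_neq0 ?hd1 //.
Qed.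
End Cases.
Section Class.
Variables (F : fieldType) (m b : F).
Hypotheses (hm0 : m != 0) (hm1 : m != 1).
Notation S := (Gamma_sys m b).

Definition wfront (i : gamma_idx) : word :=
  match i with Alpha => [:: LA] | Beta => [:: LA] | Gamma => [:: LB] | Delta => [:: LC]
  | Eps k => LB :: Cpow k.+1 end.
Definition wlast (i : gamma_idx) : letter :=
  match i with Alpha => LB | Beta => LC | Gamma => LA | Delta => LB | Eps _ => LA end.
Lemma W_rcons i : gamma_W i = rcons (wfront i) (wlast i).
Proof. by case: i => // k; rewrite /= -cats1. Qed.

Lemma two_letter (a c y : letter) (L X' : word) : [:: a; c] = L ++ y :: X' -> L != [::] -> [/\ L = [:: a], y = c & X' = [::]].
Proof.
intros H HL; destruct L as [|z [|z' L]]; simpl in H; first by [].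
- by injection H as H1 H2 H3; subst.
- injection H as H1 H2 H3; destruct L; discriminate.
Qed.

Lemma tail_one (X' R : word) (c : letter) : X' ++ R = [:: c] -> R != [::] -> X' = [::] /\ R = [:: c].
Proof.
intros H HR; destruct X' as [|y X']; first by [].
simpl in H; injection H as H1 H2; destruct X'; destruct R; discriminate || done.
Qed.

Lemma overlap_all mu nu L X R : is_overlap_ambiguity (S:=S) mu nu L X R -> overlap_resolvable (S:=S) mu nu L R.
Proof.
case=> hL hX hR Emu Enu; rewrite /= in Emu Enu.
destruct X as [|x X']; first by [].
destruct nu as [| | | |j]; simpl in Enu.
1-4: injection Enu as Ex Et; symmetry in Et; have [E1 E2] := tail_one Et hR; subst;
  rewrite W_rcons cats1 in Emu; case/rcons_inj: Emu => E1 E2; subst;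
  destruct mu; simpl in E2; try discriminate; simpl.
all: try solve [first [eapply case1 | eapply case3 | eapply case4 | eapply case5 | eapply case7 | eapply case8 | eapply case9]; eassumption].
injection Enu as Ex Et; subst x.
destruct mu as [| | | |k]; simpl in Emu.
1-4: have [E1 E2 E3] := two_letter Emu hL; subst; try discriminate; simpl in Et; try subst R.
- exact: (@case2 F m b hm0 hm1 j).
- exact: (@case6 F m b hm0 hm1 j).
destruct L as [|z L']; first by [].
simpl in Emu; injection Emu as Ez Ew.
have : LB \in L' ++ LB :: X' by rewrite mem_cat mem_head orbT.
by rewrite -Ew /Cpow in_cons mem_cat mem_nseq /= ?andbF.
Qed.
End Class.
Section Incl.
Variables (F : fieldType) (m b : F).
Notation S := (Gamma_sys m b).

Lemma W_inj i j : gamma_W i = gamma_W j -> i = j.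
Proof.
case: i; case: j => //= k l; try (move=> H; injection H; discriminate) ; try discriminate.
move=> H; injection H => H'.
have := congr1 size H'; rewrite !size_cat !size_Cpow => /eqP; rewrite eqn_add2r => /eqP -> //.
Qed.

Lemma size_W i : (2 <= size (gamma_W i))%N.
Proof. by case: i => //= k; rewrite size_cat size_Cpow. Qed.

Lemma noA_t j : LA \notin LB :: Cpow j.
Proof. by rewrite in_cons /Cpow mem_nseq /= andbF. Qed.
Lemma noB_t j : LB \notin Cpow j ++ [:: LA].
Proof. by rewrite /Cpow mem_cat mem_nseq /= andbF. Qed.

Lemma incl_none mu nu L X R : ~ is_inclusion_ambiguity (S:=S) mu nu L X R.
Proof.
case=> hne Emu Enu; rewrite /= in Emu Enu; subst X.
apply: hne.
destruct nu as [| | | |j].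
1-4: have := congr1 size Enu; rewrite !size_cat /= => Hs;
  have := size_W mu; move=> Hm;
  (have HL : size L = 0%N by lia); (have HR : size R = 0%N by lia);
  move/size0nil: HL => HL; move/size0nil: HR => HR; subst;
  rewrite cats0 /= in Enu; exact: W_inj.
have EW : gamma_W (Eps j) = rcons (LB :: Cpow j.+1) LA by rewrite /= -cats1.
rewrite EW in Enu.
destruct mu as [| |  | |k].
2: {
  case/lastP: R Enu => [|R' r] Enu.
  - rewrite cats0 in Enu.
    have H : L ++ gamma_W Beta = rcons (L ++ [:: LA]) LC by rewrite -cats1 -catA.
    rewrite H in Enu; case/rcons_inj: Enu => _ E; discriminate.
  - rewrite catA -rcons_cat in Enu; case/rcons_inj: Enu => E1 E2; subst r.
    have := noA_t j.+1; by rewrite E1 !mem_cat mem_head orbT. }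
all: destruct L as [|z L']; [idtac | case: Enu => _ /(congr1 (fun s => LB \in s)); rewrite !(inE, mem_cat, mem_rcons) /Cpow ?mem_nseq /= ?orbT ?andbF //].
all: try (move=> H; exfalso; move: H; rewrite !inE /=; rewrite ?orbT //).
all: case/lastP: R Enu => [|R' r] Enu; [rewrite cats0 in Enu; apply: W_inj; by rewrite EW Enu | idtac].
all: rewrite cat0s -rcons_cat in Enu; case/rcons_inj: Enu => E1 E2; try discriminate.
have : LA \in Cpow j by rewrite E1 !mem_cat mem_head orbT.
by rewrite /Cpow mem_nseq andbF.
Qed.
End Incl.

Theorem lemma3p2 (F : fieldType) (m b : F) (hm0 : m != 0) (hm1 : m != 1) :
  (forall (mu nu : gamma_idx) (L X R : word),
      ~ @is_inclusion_ambiguity F (Gamma_sys m b) mu nu L X R) /\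
  (forall (mu nu : gamma_idx) (L X R : word),
      @is_overlap_ambiguity F (Gamma_sys m b) mu nu L X R ->
      @overlap_resolvable F (Gamma_sys m b) mu nu L R).
Proof.
split.
- move=> mu nu L X R; exact: incl_none.
- move=> mu nu L X R H; exact: (overlap_all hm0 hm1 H).
Qed.
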